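(* Let $(Q,\mathcal M)$ be a modulated quiver with $\mathcal M$ v-uniform, $I$ an admissible ideal of $T(Q,\mathcal M)$, $\Psi$ a complexification isomorphism, $J=\Psi(\mathbf e(I\otimes_{\mathbb R}\mathbb C)\mathbf e)$, and $p$ a path of $Q$. (1) If $\mathcal M$ is v-uniform with $\mathbb R$ or with $\mathbb H$, then $\Gamma=Q$, the path $p$ of $\Gamma$ is the only fiber of $p$, and $p\in R_I$ if and only if $p\in J$. (2) If $\mathcal M$ is v-uniform with $\mathbb C$, then $p$ has exactly two fibers $p',p''$ in $\Gamma$, and $p\in R_I\iff p'\in J\iff p''\in J$.
   Context: Quivers $Q=(Q_0,Q_1,s,t)$ are finite; an arrow $\alpha$ goes from $s(\alpha)$ to $t(\alpha)$. Paths are written from right to left: a path of length $n\ge1$ is $p=\alpha_n\cdots\alpha_1$ with $t(\alpha_k)=s(\alpha_{k+1})$; each vertex $i$ has a trivial path $e_i$. For a division ring $D$, $DQ$ denotes the path algebra of $Q$ over $D$ (free left $D$-module on the paths, scalars commuting with paths, multiplication by concatenation). Let $\mathbb H=\{\begin{bmatrix}a&b\\-\bar b&\bar a\end{bmatrix}:a,b\in\mathbb C\}\subset M_2(\mathbb C)$ be the real quaternions. A modulation $\mathcal M$ of $Q$ assigns to each vertex $i$ a division ring $\mathcal M(i)\in\{\mathbb R,\mathbb C,\mathbb H\}$ and to each arrow $\alpha$ a simple $\mathcal M(t(\alpha))$-$\mathcal M(s(\alpha))$-bimodule $\mathcal M(\alpha)$ on which $\mathbb R$ acts centrally; $(Q,\mathcal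 M)$ is a modulated quiver. Up to isomorphism there is exactly one such simple bimodule for each pair of these division rings other than $(\mathbb C,\mathbb C)$, and for $(\mathbb C,\mathbb C)$ there are exactly two: $\mathbb C$ with action $a\cdot z\cdot b=azb$, and $\overline{\mathbb C}$, which is $\mathbb C$ as a set with action $a\cdot z\cdot b=az\bar b$. For a path $p=\alpha_n\cdots\alpha_1$ put $\mathcal M(p)=\mathcal M(\alpha_n)\otimes_{\mathcal M(s(\alpha_n))}\cdots\otimes_{\mathcal M(s(\alpha_2))}\mathcal M(\alpha_1)$, and $\mathcal M(e_i)=\mathcal M(i)$. The tensor algebra is $T(Q,\mathcal M)=\prod_{i\in Q_0}\mathcal M(i)\oplus\bigoplus_{p}\mathcal M(p)$ (sum over paths of length $\ge1$). An ideal $I$ of $T(Q,\mathcal M)$ is admissible if $A^m\subseteq I\subseteq A^2$ for some $m\ge2$, where $A$ is the ideal generated by $\bigoplus_{\alpha\in Q_1}\mathcal M(\alpha)$. $\mathcal M$ is v-uniform with $D\in\{\mathbb R,\mathbb C,\mathbb H\}$ if $\mathcal M(i)=D$ for all $i\in Q_0$. Then every $\mathcal M(\alpha)$ has underlying set $D$, and for a path $p$ we write $1_{\mathcal M(p)}=1\otimes\cdots\otimes1\in\mathcal M(p)$ ($1_{\mathcal M(e_i)}$ being the identity of $\mathcal M(i)$). For an ideal $I$ of $T(Q,\mathcal M)$ put $R_I=\{\sum_k d_kp_k\in DQ:\ \sum_k d_k1_{\mathcal M(p_k)}\in I\}$, an ideal of $DQ$. The quiver $\Gamma$ of $(Q,\mathcal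 M)$: each $i\in Q_0$ with $\mathcal M(i)\in\{\mathbb R,\mathbb H\}$ gives one vertex $i$ of $\Gamma$; each $i$ with $\mathcal M(i)=\mathbb C$ gives two vertices $i,\bar i$. Each arrow $\alpha:i\to j$ of $Q$ gives arrows of $\Gamma$ as follows: if $\mathcal M(i)=\mathcal M(j)\in\{\mathbb R,\mathbb H\}$, one arrow $\alpha:i\to j$; if $\mathcal M(i)=\mathbb C$ and $\mathcal M(j)\in\{\mathbb R,\mathbb H\}$, arrows $\alpha:i\to j$, $\bar\alpha:\bar i\to j$; if $\mathcal M(i)\in\{\mathbb R,\mathbb H\}$ and $\mathcal M(j)=\mathbb C$, arrows $\alpha:i\to j$, $\bar\alpha:i\to\bar j$; if $\{\mathcal M(i),\mathcal M(j)\}=\{\mathbb R,\mathbb H\}$, two arrows $\alpha,\bar\alpha:i\to j$; if $\mathcal M(i)=\mathcal M(j)=\mathbb C$ and $\mathcal M(\alpha)=\mathbb C$, arrows $\alpha:i\to j$, $\bar\alpha:\bar i\to\bar j$; if $\mathcal M(i)=\mathcal M(j)=\mathbb C$ and $\mathcal M(\alpha)=\overline{\mathbb C}$, arrows $\alpha:\bar i\to j$, $\bar\alpha:i\to\bar j$. The map $\pi:\Gamma\to Q$ sends $i,\bar i\mapsto i$ and $\alpha,\bar\alpha\mapsto\alpha$. A vertex or arrow $x$ of $\Gamma$ is a fiber of $\pi(x)$; a path $\beta_n\cdots\beta_1$ of $\Gamma$ is a fiber of the path $\pi(\beta_n)\cdots\pi(\beta_1)$ of $Q$, and the fibers of a trivial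 path $e_i$ are the trivial paths $e_{i'}$ with $i'$ a fiber of $i$. Identify $\mathbb R\otimes_{\mathbb R}\mathbb C=\mathbb C$, $\mathbb H\otimes_{\mathbb R}\mathbb C\cong M_2(\mathbb C)$ via $h\otimes c\mapsto ch$, and $\mathbb C\otimes_{\mathbb R}\mathbb C\cong\mathbb C\times\mathbb C$ via $a\otimes b\mapsto(ab,\bar ab)$. Let $\mathbf e=(\epsilon_i)_{i\in Q_0}\in\prod_i\mathcal M(i)\otimes_{\mathbb R}\mathbb C\subseteq T(Q,\mathcal M)\otimes_{\mathbb R}\mathbb C$, where $\epsilon_i=1$ if $\mathcal M(i)\in\{\mathbb R,\mathbb C\}$ and $\epsilon_i$ corresponds to the matrix unit $\begin{bmatrix}1&0\\0&0\end{bmatrix}$ if $\mathcal M(i)=\mathbb H$. A complexification isomorphism for $(Q,\mathcal M)$ is a $\mathbb C$-algebra isomorphism $\Psi:\mathbf e(T(Q,\mathcal M)\otimes_{\mathbb R}\mathbb C)\mathbf e\to\mathbb C\Gamma$ such that for every path $p$ of $Q$ (trivial or not), $\Psi(\mathbf e(\mathcal M(p)\otimes_{\mathbb R}\mathbb C)\mathbf e)=\bigoplus_q\mathbb Cq$, the sum over all fibers $q$ of $p$ in $\Gamma$; such isomorphisms exist. *)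

(* Defs.v *)
From HB Require Import structures.
From mathcomp Require Import all_boot all_order all_algebra.
From mathcomp Require Import reals complex.
Set Implicit Arguments. Unset Strict Implicit. Unset Printing Implicit Defensive.
Import Order.TTheory GRing.Theory Num.Theory.
Local Open Scope ring_scope.
Local Open Scope complex_scope.

Record quiver := Quiver { qV : finType; qA : finType; qs : qA -> qV; qt : qA -> qV }.

(* A raw path is a pair (start vertex, [:: a_1; ...; a_n]); it denotes the
   path a_n ... a_1 (written right to left) when it is a [chain]:
   s(a_1) = start and t(a_k) = s(a_(k+1)).  The trivial path e_i is (i, [::]). *)
Definition rpath (Q : quiver) : Type := (qV Q * seq (qA Q))%type.

Fixpoint chain_from (Q : quiver) (v : qV Q) (l : seq (qA Q)) : bool :=
  match l with
  | [::] => true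
  | a :: l' => (qs a == v) && chain_from (qt a) l'
  end.

Definition is_path (Q : quiver) (p : rpath Q) : bool := chain_from p.1 p.2.

Definition vert_after (Q : quiver) (p : rpath Q) (k : nat) : qV Q :=
  last p.1 (map (@qt Q) (take k p.2)).

(* functions on raw paths (elements of path algebras / tensor algebras are
   the finitely supported ones vanishing off genuine paths) *)
Definition fn (Q : quiver) (X : Type) : Type := rpath Q -> X.

Definition finsupp (Q : quiver) (X : Type) (x0 : X) (f : fn Q X) : Prop :=
  (forall p, ~~ is_path p -> f p = x0) /\
  exists s : seq (rpath Q), forall p, p \notin s -> f p = x0.

Definition delta (Q : quiver) (X : Type) (x0 : X) (p : rpath Q) (d : X) : fn Q X :=
  fun q => if q == p then d else x0.

(* Convolution product over all factorizations r = p q  (p after q):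
   q = first k arrows (from the start of r), p = remaining arrows,
   starting at the junction vertex; [comb p a b] combines coefficients. *)
Definition convol (Q : quiver) (X : Type) (add : X -> X -> X) (zero : X)
    (comb : seq (qA Q) -> X -> X -> X) (f g : fn Q X) : fn Q X :=
  fun r => if is_path r then
    \big[add/zero]_(k < (size r.2).+1)
       comb (drop k r.2) (f (vert_after r k, drop k r.2)) (g (r.1, take k r.2))
  else zero.

Inductive dkind := DR | DC | DH.

Section DivRings.
Variable R : realType.

(* H : the quaternion [[a, b], [-b^*, a^*]] is stored as the pair (a, b). *)
Definition quat : Type := (R[i] * R[i])%type.
Definition Hmat (h : quat) : 'M[R[i]]_2 :=
  \matrix_(i < 2, j < 2)
    (if (i == 0) && (j == 0) then h.1 else if (i == 0) then h.2
     else if (j == 0) then - (h.2)^* else (h.1)^*).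
Definition Hadd (x y : quat) : quat := (x.1 + y.1, x.2 + y.2).
Definition Hopp (x : quat) : quat := (- x.1, - x.2).
(* matrix product of the representing matrices *)
Definition Hmul (x y : quat) : quat :=
  (x.1 * y.1 - x.2 * (y.2)^*, x.1 * y.2 + x.2 * (y.1)^*).
Definition Hreal (r : R) : quat := (r%:C, 0).
Definition Hi : quat := ('i, 0).   (* the quaternion diag(i, -i) *)

Definition Dty (k : dkind) : Type :=
  match k with DR => R | DC => R[i] | DH => quat end.

Definition Dzero (k : dkind) : Dty k :=
  match k return Dty k with DR => 0 | DC => 0 | DH => Hreal 0 end.
Definition Done (k : dkind) : Dty k :=
  match k return Dty k with DR => 1 | DC => 1 | DH => Hreal 1 end.
Definition Dadd (k : dkind) : Dty k -> Dty k -> Dty k :=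
  match k return Dty k -> Dty k -> Dty k with
  | DR => fun x y => x + y | DC => fun x y => x + y | DH => Hadd end.
Definition Dopp (k : dkind) : Dty k -> Dty k :=
  match k return Dty k -> Dty k with
  | DR => fun x => - x | DC => fun x => - x | DH => Hopp end.
Definition Dmul (k : dkind) : Dty k -> Dty k -> Dty k :=
  match k return Dty k -> Dty k -> Dty k with
  | DR => fun x y => x * y | DC => fun x y => x * y | DH => Hmul end.
Definition Dreal (k : dkind) : R -> Dty k :=
  match k return R -> Dty k with
  | DR => fun r => r | DC => fun r => r%:C | DH => Hreal end.
(* complex conjugation on C; identity on R and H (only used when k = DC) *)
Definition Dconj (k : dkind) : Dty k -> Dty k :=
  match k return Dty k -> Dty k with
  | DR => id | DC => fun x => x^* | DH => id end.

End DivRings.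


(* A v-uniform modulation is given by the kind k of D (R, C or H) and,  *)
(* for k = DC, by cj : arrows -> bool, cj a = true meaning M(a) = Cbar  *)
(* and cj a = false meaning M(a) = C (for k = DR, DH, the bimodules are  *)
(* forced to be D and cj is ignored).                                  *)
(* Each M(p) is free of rank one as a left D-module on 1_{M(p)}, and    *)
(* 1_{M(p)} . d = sigma_p(d) 1_{M(p)}, with sigma_p the composite of    *)
(* the twists of the arrows of p (conjugation for each Cbar arrow).    *)
(* An element of T is thus identified with the finitely supported      *)
(* family (d_p)_p, standing for  sum_p d_p 1_{M(p)}.                    *)
Section Tensor.
Variables (R : realType) (Q : quiver) (k : dkind) (cj : qA Q -> bool).

Local Notation D := (Dty R k).
Local Notation TF := (fn Q D).

Definition twist (l : seq (qA Q)) (d : D) : D :=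
  if odd (count cj l) then Dconj d else d.

Definition isT (f : TF) : Prop := finsupp (@Dzero R k) f.
Definition T0 : TF := fun _ => @Dzero R k.
Definition Tadd (f g : TF) : TF := fun p => Dadd (f p) (g p).
Definition Topp (f : TF) : TF := fun p => Dopp (f p).
Definition Trscale (r : R) (f : TF) : TF := fun p => Dmul (@Dreal R k r) (f p).
(* (d 1_{M(p)}) (d' 1_{M(q)}) = d sigma_p(d') 1_{M(pq)} *)
Definition Tmul (f g : TF) : TF :=
  convol (@Dadd R k) (@Dzero R k) (fun lp a b => Dmul a (twist lp b)) f g.
Definition Tone : TF := fun p => if p.2 == [::] then @Done R k else @Dzero R k.

Definition is_ideal (I : TF -> Prop) : Prop :=
  [/\ forall f, I f -> isT f,
      I T0,
      forall f g, I f -> I g -> I (Tadd f g)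
    & forall f a, I f -> isT a -> I (Tmul a f) /\ I (Tmul f a)].

Definition gen_ideal (S : TF -> Prop) : TF -> Prop :=
  fun f => forall I, is_ideal I -> (forall x, S x -> I x) -> I f.

Definition ideal_prod (I1 I2 : TF -> Prop) : TF -> Prop :=
  gen_ideal (fun f => exists x y, [/\ I1 x, I2 y & f = Tmul x y]).

Definition arrow_ideal : TF -> Prop :=
  gen_ideal (fun f => exists (a : qA Q) (d : D), f = delta (@Dzero R k) (qs a, [:: a]) d).

Fixpoint ideal_pow (I : TF -> Prop) (n : nat) : TF -> Prop :=
  match n with
  | 0 => isT
  | n'.+1 => ideal_prod (ideal_pow I n') I
  end.

Definition admissible (I : TF -> Prop) : Prop :=
  is_ideal I /\ exists m, (2 <= m)%N /\
    (forall f, ideal_pow arrow_ideal m f -> I f) /\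
    (forall f, I f -> ideal_pow arrow_ideal 2 f).

(* R_I (an ideal of DQ): sum_k d_k p_k lies in R_I iff sum_k d_k 1_{M(p_k)}
   lies in I; with the identification above both sides are the same
   family of coefficients. *)
Definition RI (I : TF -> Prop) : TF -> Prop := fun f => isT f /\ I f.

(* Complexification T (x)_R C: the element x (x) 1 + y (x) i is the     *)
(* pair (x, y).                                                         *)
Definition TC : Type := (TF * TF)%type.
Definition isTC (z : TC) : Prop := isT z.1 /\ isT z.2.
Definition TCadd (z w : TC) : TC := (Tadd z.1 w.1, Tadd z.2 w.2).
Definition TCmul (z w : TC) : TC :=
  (Tadd (Tmul z.1 w.1) (Topp (Tmul z.2 w.2)), Tadd (Tmul z.1 w.2) (Tmul z.2 w.1)).
(* complex scalars act on the second tensor factor *)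
Definition TCscale (c : R[i]) (z : TC) : TC :=
  (Tadd (Trscale (complex.Re c) z.1) (Topp (Trscale (complex.Im c) z.2)),
   Tadd (Trscale (complex.Im c) z.1) (Trscale (complex.Re c) z.2)).

(* the idempotent e = (eps_i)_i : eps_i = 1 if D = R, C; if D = H, eps_i is
   the element of H (x)_R C ~ M_2(C) (h (x) c |-> c h) corresponding to the
   matrix unit E_11, namely 1/2 (1 (x) 1) - 1/2 (Hi (x) i). *)
Definition ebf : TC :=
  match k return (fn Q (Dty R k) * fn Q (Dty R k))%type with
  | DH => (fun p => if p.2 == [::] then Hreal (2^-1) else Hreal 0,
           fun p => if p.2 == [::] then Hmul (Hreal (- 2^-1)) (Hi R) else Hreal 0)
  | DR => (fun p => if p.2 == [::] then 1 else 0, fun _ => 0)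
  | DC => (fun p => if p.2 == [::] then 1 else 0, fun _ => 0)
  end.

Definition corner (z : TC) : Prop := exists w, isTC w /\ z = TCmul ebf (TCmul w ebf).

Definition IC (I : TF -> Prop) (z : TC) : Prop := I z.1 /\ I z.2.

Definition onlyat (p : rpath Q) (f : TF) : Prop := forall q, q != p -> f q = @Dzero R k.
Definition MpC (p : rpath Q) (z : TC) : Prop := onlyat p z.1 /\ onlyat p z.2.

End Tensor.

Definition Gamma (Q : quiver) (k : dkind) (cj : qA Q -> bool) : quiver :=
  match k with
  | DC => @Quiver (qV Q * bool)%type (qA Q * bool)%type
            (* (i, false) = i, (i, true) = ibar; (a, false) = a, (a, true) = abar *)
            (fun a => (qs a.1, a.2 (+) cj a.1)) (fun a => (qt a.1, a.2))
  | _ => Q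
  end.

Definition piV (Q : quiver) (k : dkind) (cj : qA Q -> bool) :
    qV (Gamma k cj) -> qV Q :=
  match k return qV (Gamma k cj) -> qV Q with
  | DC => fst | DR => id | DH => id end.

Definition piA (Q : quiver) (k : dkind) (cj : qA Q -> bool) :
    qA (Gamma k cj) -> qA Q :=
  match k return qA (Gamma k cj) -> qA Q with
  | DC => fst | DR => id | DH => id end.

Definition fiber (Q : quiver) (k : dkind) (cj : qA Q -> bool)
    (q : rpath (Gamma k cj)) (p : rpath Q) : Prop :=
  [/\ is_path q, piV q.1 = p.1 & map (@piA Q k cj) q.2 = p.2].

Section Complexification.
Variables (R : realType) (Q : quiver) (k : dkind) (cj : qA Q -> bool).

Local Notation G := (Gamma k cj).
Local Notation CG := (fn G R[i]).

Definition isCG (h : CG) : Prop := finsupp 0 h.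
Definition CGadd (h h' : CG) : CG := fun q => h q + h' q.
Definition CGscale (c : R[i]) (h : CG) : CG := fun q => c * h q.
Definition CGmul (h h' : CG) : CG := convol +%R 0 (fun _ a b => a * b) h h'.

Definition cplx_iso (Psi : @TC R Q k -> CG) : Prop :=
  (forall z, @corner R Q k cj z -> isCG (Psi z)) /\
      (forall z w, @corner R Q k cj z -> @corner R Q k cj w -> Psi (@TCadd R Q k z w) = CGadd (Psi z) (Psi w)) /\
      (forall c z, @corner R Q k cj z -> Psi (@TCscale R Q k c z) = CGscale c (Psi z)) /\
      (forall z w, @corner R Q k cj z -> @corner R Q k cj w ->
          Psi (@TCmul R Q k cj z w) = CGmul (Psi z) (Psi w)) /\
      (forall z w, @corner R Q k cj z -> @corner R Q k cj w -> Psi z = Psi w -> z = w) /\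
      (forall h, isCG h -> exists z, @corner R Q k cj z /\ Psi z = h) /\
      (forall p : rpath Q, is_path p -> forall h : CG,
        (exists z, [/\ @isTC R Q k z, @MpC R Q k p z & h = Psi (@TCmul R Q k cj (@ebf R Q k) (@TCmul R Q k cj z (@ebf R Q k)))])
        <-> (forall q, ~ @fiber Q k cj q p -> h q = 0)).

Definition Jideal (I : fn Q (Dty R k) -> Prop) (Psi : @TC R Q k -> CG) : CG -> Prop :=
  fun h => exists z, @IC R Q k I z /\ h = Psi (@TCmul R Q k cj (@ebf R Q k) (@TCmul R Q k cj z (@ebf R Q k))).

End Complexification.

(* Main.v *)
Require Import Defs.
From HB Require Import structures.
From mathcomp Require Import all_boot all_order all_algebra.
From mathcomp Require Import reals complex.
From mathcomp Require Import ring.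
From Stdlib Require Import Classical FunctionalExtensionality.
Set Implicit Arguments. Unset Strict Implicit. Unset Printing Implicit Defensive.
Import Order.TTheory GRing.Theory Num.Theory.
Local Open Scope ring_scope.

Lemma big_last_only (T : Type) (op : T -> T -> T) (idx : T)
  (Hl : forall x, op idx x = x) (Hr : forall x, op x idx = x) n (F : 'I_n.+1 -> T) :
  (forall i : 'I_n.+1, i != ord_max -> F i = idx) -> \big[op/idx]_(i < n.+1) F i = F ord_max.
Proof.
elim: n F => [|n IH] F HF.
  by rewrite big_ord_recl big_ord0 Hr; congr F; apply: val_inj.
rewrite big_ord_recl HF; last by apply/eqP => /(congr1 val).
rewrite Hl IH; first by congr F; apply: val_inj.
move=> i Hi; apply: HF; apply/eqP => /(congr1 val) /= [] H.
by move/negP: Hi; apply; apply/eqP/val_inj => /=; move: H; rewrite add0n.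
Qed.

Lemma big_first_only (T : Type) (op : T -> T -> T) (idx : T)
  (Hl : forall x, op idx x = x) (Hr : forall x, op x idx = x) n (F : 'I_n.+1 -> T) :
  (forall i : 'I_n.+1, i != ord0 -> F i = idx) -> \big[op/idx]_(i < n.+1) F i = F ord0.
Proof.
move=> HF; rewrite big_ord_recl.
have -> : \big[op/idx]_(i < n) F (lift ord0 i) = idx.
  elim: n F HF => [|n IH] F HF; first by rewrite big_ord0.
  rewrite big_ord_recl HF // Hl.
  have := IH (fun i : 'I_n.+1 => F (lift ord0 i)); apply => i Hi.
  by apply: HF.
by rewrite Hr.
Qed.

Section Core.
Variables (R : realType) (Q : quiver) (k : dkind) (cj : qA Q -> bool).
Local Notation D := (Dty R k).
Local Notation Z := (Dzero R k).
Local Notation O := (Done R k).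
Lemma Hreal0 : Hreal (0:R) = (0, 0). Proof. by []. Qed.
Lemma Hreal1 : Hreal (1:R) = (1, 0). Proof. by []. Qed.

Lemma Dadd0l (x : D) : Dadd Z x = x.
Proof. case: k x => x /=; rewrite ?add0r //; case: x => a b; by rewrite /Hadd /= !add0r. Qed.
Lemma Dadd0r (x : D) : Dadd x Z = x.
Proof. case: k x => x /=; rewrite ?addr0 //; case: x => a b; by rewrite /Hadd /= !addr0. Qed.
Lemma Dopp0 : Dopp Z = Z.
Proof. case: k => /=; rewrite ?oppr0 //; by rewrite /Hopp /= oppr0. Qed.
Lemma Dmul0l (x : D) : Dmul Z x = Z.
Proof. case: k x => x /=; rewrite ?mul0r //; case: x => a b; by rewrite /Hmul ?Hreal0 ?Hreal1 /= !mul0r subr0 addr0. Qed.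
Lemma Dmul0r (x : D) : Dmul x Z = Z.
Proof. case: k x => x /=; rewrite ?mulr0 //; case: x => a b; by rewrite /Hmul ?Hreal0 ?Hreal1 /= conjC0 !mulr0 subr0 addr0. Qed.
Lemma Dconj0 : Dconj Z = Z.
Proof. case: k => //=; exact: conjC0. Qed.
Lemma Dmul1r (x : D) : Dmul x O = x.
Proof. case: k x => x /=; rewrite ?mulr1 //; case: x => a b; by rewrite /Hmul ?Hreal0 ?Hreal1 /= conjC0 conjC1 !mulr0 subr0 !mulr1 add0r. Qed.
Lemma DmulN1 (x : D) : Dmul (Dopp O) x = Dopp x.
Proof. case: k x => x /=; rewrite ?mulN1r //; case: x => a b; by rewrite /Hmul /Hopp ?Hreal0 ?Hreal1 /= oppr0 !mul0r subr0 addr0 !mulN1r. Qed.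

Lemma Dinv (x : D) : x <> Z -> exists y, Dmul y x = O.
Proof.
case: k x => x /= Hx.
- by exists x^-1; rewrite mulVf //; apply/eqP.
- by exists x^-1; rewrite mulVf //; apply/eqP.
case: x Hx => a b Hx.
set N := a * a^* + b * b^*.
have HN : N != 0.
  apply/negP => /eqP HN0; apply: Hx.
  have ha : 0 <= a * a^* by exact: mul_conjC_ge0.
  have hb : 0 <= b * b^* by exact: mul_conjC_ge0.
  move/eqP: HN0; rewrite paddr_eq0 // => /andP [/eqP h1 /eqP h2].
  have : a == 0 by rewrite -mul_conjC_eq0; apply/eqP.
  have : b == 0 by rewrite -mul_conjC_eq0; apply/eqP.
  by move=> /eqP -> /eqP ->.
exists (a^* / N, - b / N); rewrite /Hmul ?Hreal0 ?Hreal1 /=.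
congr pair.
  rewrite /N in HN *; by field.
by rewrite /N in HN *; field.
Qed.

Lemma twist0 l : twist cj l Z = Z.
Proof. by rewrite /twist; case: ifP => // _; exact: Dconj0. Qed.


Definition triv (A : fn Q D) := forall r : rpath Q, r.2 != [::] -> A r = Z.

Lemma LmulE (A f : fn Q D) : triv A ->
  Tmul cj A f = fun r => if is_path r then Dmul (A (vert_after r (size r.2), [::])) (f r) else Z.
Proof.
move=> HA; apply: functional_extensionality => r.
rewrite /Tmul /convol; case: ifP => // _.
rewrite (big_last_only (@Dadd0l) (@Dadd0r)).
  by rewrite /= drop_size take_size; case: r.
move=> i Hi; rewrite HA ?Dmul0l //.
rewrite -size_eq0 size_drop subn_eq0 -ltnNge.
have := ltn_ord i; rewrite ltnS leq_eqVlt => /orP [/eqP E|//].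
by move: Hi; rewrite -(inj_eq val_inj) /= E eqxx.
Qed.

Lemma RmulE (A f : fn Q D) : triv A ->
  Tmul cj f A = fun r => if is_path r then Dmul (f r) (twist cj r.2 (A (r.1, [::]))) else Z.
Proof.
move=> HA; apply: functional_extensionality => r.
rewrite /Tmul /convol; case: ifP => // _.
rewrite (big_first_only (@Dadd0l) (@Dadd0r)).
  by rewrite /= drop0 take0 /vert_after take0 /=; case: r.
move=> i Hi; rewrite HA ?twist0 ?Dmul0r //.
rewrite -size_eq0 size_take.
have Hi0 : (0 < i)%N by rewrite lt0n; move: Hi; rewrite -(inj_eq val_inj).
have := ltn_ord i; rewrite ltnS leq_eqVlt => /orP [/eqP E|->].
  by rewrite E ltnn -E -lt0n.
by rewrite -lt0n.
Qed.

Lemma triv_isT (A : fn Q D) : triv A -> Defs.isT A.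
Proof.
move=> HA; split.
  move=> r Hr; apply: HA; apply/negP => /eqP E; move: Hr.
  by rewrite /is_path E.
exists [seq (v, [::]) | v <- enum (qV Q)] => r Hr; apply: HA.
apply/negP => /eqP E; move: Hr; case: r E => v l /= ->.
by rewrite map_f // mem_enum.
Qed.

Definition Aneg : fn Q D := fun r => if r.2 == [::] then Dopp O else Z.
Lemma triv_Aneg : triv Aneg.
Proof. by move=> r; rewrite /Aneg => /negbTE ->. Qed.

Definition dv (v : qV Q) (c : D) : fn Q D := delta Z (v, [::]) c.
Lemma triv_dv v c : triv (dv v c).
Proof.
move=> r Hr; rewrite /dv /delta; case: eqP => // E; by move: Hr; rewrite E eqxx.
Qed.

Lemma triv_ebf1 : triv (ebf R Q k).1.
Proof. rewrite /triv; by case: k => r /= /negbTE ->. Qed.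
Lemma triv_ebf2 : triv (ebf R Q k).2.
Proof. rewrite /triv; by case: k => r //= /negbTE ->. Qed.

Lemma scale_at (p : rpath Q) (f : fn Q D) c : is_path p -> onlyat p f ->
  Tmul cj (dv (vert_after p (size p.2)) c) f = delta Z p (Dmul c (f p)).
Proof.
move=> Hp Hf; rewrite LmulE; last exact: triv_dv.
apply: functional_extensionality => r; rewrite /delta.
case: (r =P p) => [->|/eqP ne]; first by rewrite Hp /dv /delta eqxx.
by rewrite Hf // Dmul0r; case: ifP.
Qed.

Section Ideal.
Variable I : fn Q D -> Prop.
Hypothesis HI : is_ideal cj I.

Lemma I_isT f : I f -> Defs.isT f.
Proof. by case: HI => H _ _ _; apply: H. Qed.
Lemma I_add f g : I f -> I g -> I (Tadd f g).
Proof. by case: HI => _ _ H _; apply: H. Qed.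
Lemma I_lmul a f : I f -> Defs.isT a -> I (Tmul cj a f).
Proof. by case: HI => _ _ _ H Hf Ha; case: (H f a Hf Ha). Qed.
Lemma I_rmul a f : I f -> Defs.isT a -> I (Tmul cj f a).
Proof. by case: HI => _ _ _ H Hf Ha; case: (H f a Hf Ha). Qed.
Lemma I_opp f : I f -> I (Topp f).
Proof.
move=> Hf.
have -> : Topp f = Tmul cj Aneg f.
  rewrite LmulE; last exact: triv_Aneg.
  apply: functional_extensionality => r; rewrite /Topp /Aneg /=.
  case: ifP => Hr; first by rewrite DmulN1.
  by rewrite (I_isT Hf).1 ?Hr // Dopp0.
by apply: I_lmul => //; apply: triv_isT; exact: triv_Aneg.
Qed.

Lemma IC_lmul (a z : TC R Q k) : IC I z -> isTC a -> IC I (TCmul cj a z).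
Proof.
move=> [H1 H2] [A1 A2]; split => /=.
  by apply: I_add; [apply: I_lmul | apply: I_opp; apply: I_lmul].
by apply: I_add; apply: I_lmul.
Qed.
Lemma IC_rmul (a z : TC R Q k) : IC I z -> isTC a -> IC I (TCmul cj z a).
Proof.
move=> [H1 H2] [A1 A2]; split => /=.
  by apply: I_add; [apply: I_rmul | apply: I_opp; apply: I_rmul].
by apply: I_add; [apply: I_rmul | apply: I_rmul].
Qed.

Lemma I_of_onlyat p f : is_path p -> I (delta Z p O) -> onlyat p f -> I f.
Proof.
move=> Hp Hd Hf.
have -> : f = Tmul cj (dv (vert_after p (size p.2)) (f p)) (delta Z p O).
  rewrite scale_at //; last by move=> q Hq; rewrite /delta (negbTE Hq).
  rewrite /delta eqxx Dmul1r; apply: functional_extensionality => r.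
  by case: (r =P p) => [->|/eqP ne] //; rewrite Hf.
by apply: I_lmul => //; apply: triv_isT; exact: triv_dv.
Qed.

End Ideal.

Lemma onlyat_add p (f g : fn Q D) : onlyat p f -> onlyat p g -> onlyat p (Tadd f g).
Proof. by move=> Hf Hg q Hq; rewrite /Tadd Hf // Hg // Dadd0l. Qed.
Lemma onlyat_opp p (f : fn Q D) : onlyat p f -> onlyat p (Topp f).
Proof. by move=> Hf q Hq; rewrite /Topp Hf // Dopp0. Qed.
Lemma onlyat_lmul p (A f : fn Q D) : triv A -> onlyat p f -> onlyat p (Tmul cj A f).
Proof. by move=> HA Hf q Hq; rewrite LmulE // Hf // Dmul0r; case: ifP. Qed.
Lemma onlyat_rmul p (A f : fn Q D) : triv A -> onlyat p f -> onlyat p (Tmul cj f A).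
Proof. by move=> HA Hf q Hq; rewrite RmulE // Hf // Dmul0l; case: ifP. Qed.

Lemma MpC_corner p (w : TC R Q k) : MpC p w ->
  MpC p (TCmul cj (ebf R Q k) (TCmul cj w (ebf R Q k))).
Proof.
move=> [H1 H2].
have E1 := triv_ebf1; have E2 := triv_ebf2.
have M1 : onlyat p (TCmul cj w (ebf R Q k)).1.
  by apply: onlyat_add; [apply: onlyat_rmul|apply: onlyat_opp; apply: onlyat_rmul].
have M2 : onlyat p (TCmul cj w (ebf R Q k)).2.
  by apply: onlyat_add; apply: onlyat_rmul.
split.
  by apply: onlyat_add; [apply: onlyat_lmul|apply: onlyat_opp; apply: onlyat_lmul].
by apply: onlyat_add; apply: onlyat_lmul.
Qed.

End Core.

Lemma core (R : realType) (Q : quiver) (k : dkind) (cj : qA Q -> bool)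
  (I : fn Q (Dty R k) -> Prop) (Psi : TC R Q k -> fn (Gamma k cj) R[i])
  (p : rpath Q) (q : rpath (Gamma k cj)) :
  is_ideal cj I -> cplx_iso Psi -> is_path p -> fiber q p ->
  (RI I (delta (Dzero R k) p (Done R k)) <-> Jideal I Psi (delta 0 q 1)).
Proof.
move=> HI [Hfin [Hadd [Hsc [Hmul [Hinj [Hsurj Hfib]]]]]] Hp Hq.
have Hoff : forall r, ~ fiber r p -> delta (0 : R[i]) q 1 r = 0.
  by move=> r Hr; rewrite /delta; case: eqP => // E; exfalso; apply: Hr; rewrite E.
have [w [Hw HwM Hh']] := (Hfib p Hp (delta 0 q 1)).2 Hoff.
have He : isTC (ebf R Q k).
  by split; apply: triv_isT; [apply: triv_ebf1 | apply: triv_ebf2].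
split.
  move=> [_ Hd]; exists w; split => //.
  by case: HwM => H1 H2; split; apply: (I_of_onlyat HI Hp Hd).
move=> [z [Hz Hh]].
set u := TCmul cj (ebf R Q k) (TCmul cj w (ebf R Q k)) in Hh'.
have Hzt : isTC z by case: Hz => H1 H2; split; apply: (I_isT HI).
have Hcz : corner cj (TCmul cj (ebf R Q k) (TCmul cj z (ebf R Q k))) by exists z.
have Hcu : corner cj u by exists w.
have Hu : TCmul cj (ebf R Q k) (TCmul cj z (ebf R Q k)) = u.
  by apply: Hinj => //; rewrite -Hh -Hh'.
have HuI : IC I u.
  by rewrite -Hu; apply: (IC_lmul HI) => //; apply: (IC_rmul HI).
have [M1 M2] : MpC p u by apply: MpC_corner.
case: HuI => I1 I2.
have fin : forall f : fn Q (Dty R k), I f -> onlyat p f -> f p <> Dzero R k ->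
    RI I (delta (Dzero R k) p (Done R k)).
  move=> f If Mf Hfp; have [y Hy] := Dinv Hfp.
  have Hd : I (delta (Dzero R k) p (Done R k)).
    rewrite -Hy -(scale_at cj y Hp Mf).
    by apply: (I_lmul HI) => //; apply: triv_isT; exact: triv_dv.
  by split => //; apply: (I_isT HI).
case: (classic (u.1 p = Dzero R k)) => [E1|]; last by apply: fin.
case: (classic (u.2 p = Dzero R k)) => [E2|]; last by apply: fin.
exfalso.
have Z1 : u.1 = @T0 R Q k.
  apply: functional_extensionality => r; case: (r =P p) => [->|/eqP ne] //.
  exact: M1.
have Z2 : u.2 = @T0 R Q k.
  apply: functional_extensionality => r; case: (r =P p) => [->|/eqP ne] //.
  exact: M2.
have Huu : TCadd u u = u.
  rewrite /TCadd Z1 Z2; case: (u) Z1 Z2 => a b /= -> ->.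
  by congr pair; apply: functional_extensionality => r; rewrite /Tadd /T0 Dadd0l.
have := Hadd u u Hcu Hcu; rewrite Huu -Hh' => /(congr1 (fun h => h q)).
rewrite /CGadd /delta eqxx.
move=> H; have : (1:R[i]) = 0 by apply: (@addrI _ 1); rewrite addr0 -H.
by move/eqP; rewrite oner_eq0.
Qed.

Section Fib.
Variables (Q : quiver) (cj : qA Q -> bool).

Fixpoint liftl (b : bool) (l : seq (qA Q)) : seq (qA Q * bool) :=
  match l with
  | [::] => [::]
  | a :: l' => (a, b (+) cj a) :: liftl (b (+) cj a) l'
  end.

Lemma liftl_map b l : map fst (liftl b l) = l.
Proof. by elim: l b => [|a l IH] b //=; rewrite IH. Qed.

Lemma liftl_chain v b l : chain_from v l ->
  @chain_from (Gamma DC cj) (v, b) (liftl b l).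
Proof.
elim: l v b => [|a l IH] v b //= /andP [/eqP Hs Hc].
by rewrite addbK Hs eqxx /= IH.
Qed.

Lemma chain_liftl v b (l : seq (qA (Gamma DC cj))) :
  @chain_from (Gamma DC cj) (v, b) l -> l = liftl b (map fst l).
Proof.
elim: l v b => [|[a b'] l IH] v b //= /andP [/eqP [Hs Hb] Hc].
by rewrite -Hb addbK -(IH _ _ Hc).
Qed.

Definition pl (p : rpath Q) (b : bool) : rpath (Gamma DC cj) := ((p.1, b), liftl b p.2).

Lemma fiberDC (p : rpath Q) : is_path p ->
  forall q : rpath (Gamma DC cj), fiber q p <-> q = pl p false \/ q = pl p true.
Proof.
move=> Hp q; split.
  case: q => [[v b] l] [Hq /= Hv Hl].
  have E := chain_liftl Hq; rewrite Hl Hv in E.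
  move: E => /= ->; rewrite /pl -Hv; case: b {Hq} => /=; [right|left]; reflexivity.
have H : forall b0, fiber (pl p b0) p.
  move=> b0; split => //=; last exact: liftl_map.
  by rewrite /is_path /=; apply: liftl_chain.
by case=> ->; apply: H.
Qed.

End Fib.

Theorem lemma3p10 (R : realType) :
  (forall (Q : quiver) (cj : qA Q -> bool) (I : fn Q (Dty R DR) -> Prop)
          (Psi : TC R Q DR -> fn (Gamma DR cj) R[i]) (p : rpath Q),
     admissible cj I -> cplx_iso Psi -> is_path p ->
     [/\ Gamma DR cj = Q,
         (forall q : rpath (Gamma DR cj), fiber q p <-> q = p)
       & (RI I (delta (Dzero R DR) p (Done R DR)) <-> Jideal I Psi (delta 0 p 1))]) /\
  (forall (Q : quiver) (cj : qA Q -> bool) (I : fn Q (Dty R DH) -> Prop)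
          (Psi : TC R Q DH -> fn (Gamma DH cj) R[i]) (p : rpath Q),
     admissible cj I -> cplx_iso Psi -> is_path p ->
     [/\ Gamma DH cj = Q,
         (forall q : rpath (Gamma DH cj), fiber q p <-> q = p)
       & (RI I (delta (Dzero R DH) p (Done R DH)) <-> Jideal I Psi (delta 0 p 1))]) /\
  (forall (Q : quiver) (cj : qA Q -> bool) (I : fn Q (Dty R DC) -> Prop)
          (Psi : TC R Q DC -> fn (Gamma DC cj) R[i]) (p : rpath Q),
     admissible cj I -> cplx_iso Psi -> is_path p ->
     exists p' p'' : rpath (Gamma DC cj),
       [/\ p' <> p'',
           (forall q : rpath (Gamma DC cj), fiber q p <-> q = p' \/ q = p''),
           (RI I (delta (Dzero R DC) p (Done R DC)) <-> Jideal I Psi (delta 0 p' 1))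
         & (Jideal I Psi (delta 0 p' 1) <-> Jideal I Psi (delta 0 p'' 1))]).
Proof.
have mid : forall (T : Type) (s : seq T), [seq x | x <- s] = s by move=> T; elim => //= x s ->.
split; [|split].
- move=> Q cj I Psi p [HI _] Hiso Hp.
  have Hf : forall q : rpath (Gamma DR cj), fiber q p <-> q = p.
    move=> q; split.
      case: q => a l [_ /= -> ]; rewrite mid => ->; by case: (p).
    by move=> ->; split => //=; rewrite mid.
  split => //; apply: (@core R Q _ cj I Psi p p) => //; exact/Hf.
- move=> Q cj I Psi p [HI _] Hiso Hp.
  have Hf : forall q : rpath (Gamma DH cj), fiber q p <-> q = p.
    move=> q; split.
      case: q => a l [_ /= -> ]; rewrite mid => ->; by case: (p).
    by move=> ->; split => //=; rewrite mid.
  split => //; apply: (@core R Q _ cj I Psi p p) => //; exact/Hf.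
move=> Q cj I Psi p [HI _] Hiso Hp.
exists (pl cj p false), (pl cj p true); split.
- by case.
- exact: fiberDC.
- by apply: core => //; apply/(@fiberDC Q cj p Hp _); left.
rewrite -(core _ Hiso Hp (q := pl cj p false)) //; last by apply/(@fiberDC Q cj p Hp _); left.
by apply: core => //; apply/(@fiberDC Q cj p Hp _); right.
Qed.
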